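(* If $n\ge k\ge 3$, then the maximum defining $g_k(n)$ is achieved by an equitable partition; that is, there is a partition $n_1+\dots+n_k=n$ with $|n_i-n_j|\le1$ for all $i\ne j$ such that $g_k(n)=\sum_{i=1}^k g_k(n_i)+\prod_{i=1}^k n_i$.
   Context: The function $g_k$ is defined by: $g_k(s)=0$ for $0\le s<k$, and for $s\ge k\ge 3$, $g_k(s)=\max\left(\sum_{i=1}^k g_k(s_i)+\prod_{i=1}^k s_i\right)$, the maximum over all partitions $s_1+\dots+s_k=s$ into nonnegative integers with $s_i<s$ for each $i$. *)

(* Defs.v *)
From mathcomp Require Import all_boot.
Set Implicit Arguments. Unset Strict Implicit. Unset Printing Implicit Defensive.

(* gk_fuel k fuel s : the recursion defining g_k, with a fuel argument that
   is always large enough (fuel > s) when called from g.  Each s_i <= s,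
   so we range over {ffun 'I_k -> 'I_s.+1}. *)
Fixpoint gk_fuel (k fuel s : nat) : nat :=
  match fuel with
  | 0 => 0
  | f.+1 =>
      if s < k then 0
      else \max_(t : {ffun 'I_k -> 'I_s.+1} |
                   ((\sum_(i < k) (t i : nat)) == s) && [forall i, (t i : nat) < s])
             ((\sum_(i < k) gk_fuel k f (t i)) + \prod_(i < k) (t i : nat))
  end.

Definition g (k s : nat) : nat := gk_fuel k s.+1 s.

(* Main.v *)
Require Import Defs.
From mathcomp Require Import all_boot zify.

Definition P (K m : nat) := (m %/ K).+1 ^ (m %% K) * (m %/ K) ^ (K - m %% K).
Definition Dk (K m : nat) := (m %/ K).+1 ^ (m %% K) * (m %/ K) ^ (K.-1 - m %% K).

Lemma dm K q r : r < K -> (q * K + r) %/ K = q /\ (q * K + r) %% K = r.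
Proof.
move=> rK; have K0 : 0 < K by case: K rK.
by rewrite divnMDl // divn_small // addn0 modnMDl modn_small.
Qed.

Lemma dmS K m : 0 < K ->
  (if (m %% K).+1 < K then m.+1 %/ K = m %/ K /\ m.+1 %% K = (m %% K).+1
   else m.+1 %/ K = (m %/ K).+1 /\ m.+1 %% K = 0).
Proof.
move=> K0.
have e : m.+1 = m %/ K * K + (m %% K).+1 by rewrite {1}(divn_eq m K) addnS.
case: ifP => h.
  by rewrite e; apply: dm.
have eK : (m %% K).+1 = K by have := ltn_pmod m K0; lia.
have e2 : m.+1 = (m %/ K).+1 * K + 0 by rewrite e eK; lia.
by rewrite e2; apply: dm.
Qed.

Lemma P_S K m : 0 < K -> P K m.+1 = P K m + Dk K m.
Proof.
move=> K0; rewrite /P /Dk; have := dmS K m K0.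
have rK := ltn_pmod m K0.
set q := m %/ K; set r := m %% K.
case: ifP => h [-> ->].
  have e1 : K - r = (K.-1 - r).+1 by lia.
  have e2 : K - r.+1 = K.-1 - r by lia.
  rewrite e1 e2 !expnS.
  set A := _ ^ r; set B := q ^ _. nia.
have e1 : r = K.-1 by lia.
rewrite subn0 expn0 mul1n e1 subnn expn0 muln1.
have e2 : K - K.-1 = 1 by lia.
rewrite e2 expn1.
have e3 : K = K.-1.+1 by lia.
rewrite {1}e3 expnS. nia.
Qed.

Lemma Dk_S K m : 0 < K -> Dk K m <= Dk K m.+1.
Proof.
move=> K0; rewrite /Dk; have := dmS K m K0.
have rK := ltn_pmod m K0.
set q := m %/ K; set r := m %% K.
case: ifP => h [-> ->].
  have e1 : K.-1 - r = (K.-1 - r.+1).+1 by lia.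
  rewrite e1 !expnS.
  set A := _ ^ r; set B := q ^ _. nia.
have e1 : r = K.-1 by lia.
by rewrite e1 subnn expn0 muln1 expn0 mul1n subn0.
Qed.

Lemma P_mono K m n : 0 < K -> m <= n -> P K m <= P K n.
Proof.
move=> K0 /subnK <-; elim: (n - m) => // d IH.
by rewrite addSn P_S //; apply: leq_trans IH (leq_addr _ _).
Qed.

Lemma Dk_mono K m n : 0 < K -> m <= n -> Dk K m <= Dk K n.
Proof.
move=> K0 /subnK <-; elim: (n - m) => // d IH.
by rewrite addSn; apply: leq_trans IH (Dk_S K (d + m) K0).
Qed.

Lemma P_conv K w x d : 0 < K -> w <= x -> P K x + P K (w + d) <= P K (x + d) + P K w.
Proof.
move=> K0 wx; elim: d => [|d IH]; first by rewrite !addn0 addnC.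
rewrite !addnS !P_S //.
have : w + d <= x + d by rewrite leq_add2r.
move=> /(Dk_mono K _ _ K0) => h. lia.
Qed.

Lemma P_prev K m : 1 < K -> P K.-1 (m - m %/ K) = Dk K m.
Proof.
move=> K1; have K0 : 0 < K by lia.
rewrite /Dk.
have rK := ltn_pmod m K0.
have em := divn_eq m K.
set q := m %/ K in em *; set r := m %% K in em rK *.
have [h|h] := ltnP r K.-1.
  have e : m - q = q * K.-1 + r by rewrite em; nia.
  rewrite /P e; have [-> ->] := dm K.-1 q r h.
  done.
have er : r = K.-1 by lia.
have e : m - q = q.+1 * K.-1 + 0.
  rewrite em er; nia.
rewrite /P e; have K1' : 0 < K.-1 by lia.
have [-> ->] := dm K.-1 q.+1 0 K1'.
by rewrite er subn0 expn0 mul1n subnn expn0 muln1.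
Qed.

Lemma P0 K : 0 < K -> P K 0 = 0.
Proof. by move=> K0; rewrite /P div0n mod0n subn0 exp0n. Qed.

Definition adm (k s : nat) (t : {ffun 'I_k -> 'I_s.+1}) :=
  ((\sum_(i < k) (t i : nat)) == s) && [forall i, (t i : nat) < s].
Arguments adm {k s}.

Lemma fuel_eq k s f : s < f -> gk_fuel k f s = g k s.
Proof.
rewrite /g; elim/ltn_ind: s f => s IH [|f] // sf /=.
case: ifP => // _; apply: eq_bigr => t /andP[_ /forallP ht].
congr (_ + _); apply: eq_bigr => i _.
have hi := ht i.
by rewrite IH // ?(IH _ hi) //; apply: leq_trans hi _.
Qed.

Lemma gE k s : g k s = if s < k then 0 else
  \max_(t : {ffun 'I_k -> 'I_s.+1} | adm t) (\sum_(i < k) g k (t i) + \prod_(i < k) (t i : nat)).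
Proof.
rewrite {1}/g /=; case: ifP => // _; apply: eq_bigr => t /andP[_ /forallP ht].
congr (_ + _); apply: eq_bigr => i _; exact: fuel_eq.
Qed.

Lemma g_small {k s} : s < k -> g k s = 0.
Proof. by move=> h; rewrite gE h. Qed.

Definition V k (u : {ffun 'I_k -> nat}) := \sum_(i < k) g k (u i) + \prod_(i < k) u i.
Arguments V {k}.

Lemma Vle k m (u : {ffun 'I_k -> nat}) : \sum_i u i = m ->
  (m < k \/ forall i, u i < m) -> V u <= g k m.
Proof.
move=> su h; have ule i : u i <= m by rewrite -su (bigD1 i) //= leq_addr.
case: (ltnP m k) => mk.
  have [i0 ui0] : exists i, u i == 0.
    apply/existsP; apply: contraLR mk; rewrite negb_exists => /forallP hh.
    rewrite -leqNgt -su -{1}(card_ord k) -sum1_card; apply: leq_sum => i _.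
    by have := hh i; rewrite lt0n.
  rewrite /V (g_small mk) leqn0 addn_eq0; apply/andP; split.
    apply/eqP; apply: big1 => i _.
    by apply: g_small; apply: leq_ltn_trans (ule i) mk.
  by rewrite (bigD1 i0) //= (eqP ui0).
have hu : forall i, u i < m by case: h => //; rewrite ltnNge mk.
rewrite gE ltnNge mk /=.
pose t : {ffun 'I_k -> 'I_m.+1} := [ffun i => inord (u i)].
have tv i : (t i : nat) = u i by rewrite ffunE inordK // ltnS.
apply: (bigmax_sup t).
  rewrite /adm; apply/andP; split.
    apply/eqP; rewrite -[X in _ = X]su; apply: eq_bigr => i _; apply: tv.
  by apply/forallP => i; rewrite tv.
rewrite /V; apply: eq_leq; congr (_ + _); apply: eq_bigr => i _; by rewrite tv.
Qed.

Definition E k m := m %% k * g k (m %/ k).+1 + (k - m %% k) * g k (m %/ k) + P k m.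
Definition eqt k m : {ffun 'I_k -> nat} := [ffun i : 'I_k => m %/ k + (i < m %% k)].

Lemma sum_split (F : nat -> nat) k q r : r <= k ->
  \sum_(i < k) F (q + (i < r)) = r * F q.+1 + (k - r) * F q.
Proof.
move=> rk; rewrite -(big_mkord predT (fun i => F (q + (i < r)))).
rewrite (@big_cat_nat _ _ _ r) /=; [|done|done].
rewrite (eq_big_nat _ _ (F2 := fun=> F q.+1)); last by move=> i /andP[_ ->]; rewrite addn1.
rewrite [X in _ + X](eq_big_nat _ _ (F2 := fun=> F q)); last first.
  by move=> i /andP[h _]; rewrite ltnNge h addn0.
by rewrite !sum_nat_const_nat subn0.
Qed.

Lemma prod_split k q r : r <= k ->
  \prod_(i < k) (q + (i < r)) = q.+1 ^ r * q ^ (k - r).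
Proof.
move=> rk; rewrite -(big_mkord predT (fun i => (q + (i < r)))).
rewrite (@big_cat_nat _ _ _ r) /=; [|done|done].
rewrite (eq_big_nat _ _ (F2 := fun=> q.+1)); last by move=> i /andP[_ ->]; rewrite addn1.
rewrite [X in _ * X](eq_big_nat _ _ (F2 := fun=> q)); last first.
  by move=> i /andP[h _]; rewrite ltnNge h addn0.
by rewrite !prod_nat_const_nat subn0.
Qed.

Lemma eqt_sum k m : 0 < k -> \sum_i eqt k m i = m.
Proof.
move=> k0; rewrite (eq_bigr (fun i : 'I_k => m %/ k + (i < m %% k))); last by move=> i _; rewrite ffunE.
rewrite (sum_split id) ?(ltnW (ltn_pmod _ _)) //=.
have := divn_eq m k; have := ltn_pmod m k0; nia.
Qed.

Lemma eqt_V k m : 0 < k -> V (eqt k m) = E k m.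
Proof.
move=> k0; rewrite /V /E.
rewrite (eq_bigr (fun i : 'I_k => g k (m %/ k + (i < m %% k)))); last by move=> i _; rewrite ffunE.
rewrite [X in _ + X](eq_bigr (fun i : 'I_k => (m %/ k + (i < m %% k)))); last by move=> i _; rewrite ffunE.
by rewrite (sum_split (g k)) ?prod_split ?(ltnW (ltn_pmod _ _)).
Qed.

Lemma eqt_diff k m (i j : 'I_k) : eqt k m i - eqt k m j <= 1.
Proof. rewrite !ffunE; case: (_ < _); case: (_ < _); lia. Qed.

Lemma E_S k m : 1 < k ->
  E k m.+1 + g k (m %/ k) = E k m + g k (m %/ k).+1 + P k.-1 (m - m %/ k).
Proof.
move=> k1; have k0 : 0 < k by lia.
rewrite /E (P_S k m k0) -(P_prev k m k1).
have := dmS k m k0.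
have rK := ltn_pmod m k0.
set q := m %/ k; set r := m %% k.
case: ifP => h [-> ->]; first by lia.
have e : r = k.-1 by lia.
rewrite e; lia.
Qed.

Lemma E_small k m : 2 < k -> m < k -> E k m = 0.
Proof.
move=> k2 mk; rewrite /E divn_small // modn_small //.
rewrite !g_small //; last by lia.
rewrite /P divn_small // modn_small // exp0n ?muln0 //; try lia.
all: lia.
Qed.

Lemma seq_max (s : seq nat) : s != [::] -> exists2 x : nat, x \in s & all (fun y => y <= x) s.
Proof.
elim: s => // a s IH _; case: (s =P [::]) => [->|/eqP /IH [x xs ax]].
  by exists a; rewrite ?inE ?eqxx //= leqnn.
case: (leqP a x) => h.
  by exists x; rewrite ?inE ?xs ?orbT //= h ax.
exists a; rewrite ?inE ?eqxx //= leqnn /=.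
by apply/allP => y ys; apply: leq_trans (ltnW h); apply: (allP ax).
Qed.

Lemma sum_le_size (s : seq nat) x : all (fun y => y <= x) s -> \sum_(y <- s) y <= size s * x.
Proof.
elim: s => [|a s IH] /=; first by rewrite big_nil.
by move=> /andP[ax /IH h]; rewrite big_cons mulSn leq_add.
Qed.

Lemma amgm_seq K : 0 < K -> forall s : seq nat, size s = K ->
  \prod_(x <- s) x <= P K (\sum_(x <- s) x).
Proof.
elim: K => // K IHK _ s.
case: K IHK => [_|K IHK].
  case: s => [|x [|]] //= _; by rewrite !big_cons !big_nil /P divn1 modn1 !muln1 addn0 expn0 mul1n expn1.
move e : (\sum_(x <- s) x) => m.
elim: m s e => [|m IHm] s e hs.
  case: s e hs => [|x s] //; rewrite !big_cons => e _.
  by have -> : x = 0 by lia.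
have sn : s != [::] by case: s hs e.
have [x xs ax] := seq_max _ sn.
have hp := perm_to_rem xs.
have hsum : \sum_(y <- s) y = x + \sum_(y <- rem x s) y by rewrite (perm_big _ hp) big_cons.
have hprod : \prod_(y <- s) y = x * \prod_(y <- rem x s) y by rewrite (perm_big _ hp) big_cons.
have hsz : size (rem x s) = K.+1 by rewrite size_rem // hs.
have hle := sum_le_size _ _ ax.
rewrite hs e in hle.
have x0 : 0 < x by case: (posnP x) hle => [->|//]; rewrite muln0.
have h1 : \prod_(y <- x.-1 :: rem x s) y <= P K.+2 m.
  apply: IHm; rewrite ?big_cons //=; last by rewrite hsz.
  move: hsum; rewrite e; set S := \sum_(_ <- rem _ _) _; move=> hS; lia.
rewrite big_cons in h1.
have h2 := IHK (erefl _) (rem x s) hsz.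
have h3 : P K.+1 (\sum_(y <- rem x s) y) <= P K.+1 (m - m %/ K.+2).
  apply: P_mono => //.
  have : m %/ K.+2 < x by rewrite ltn_divLR // mulnC.
  lia.
rewrite (P_prev K.+2 m (_ : 1 < K.+2)) // in h3.
rewrite hprod (P_S K.+2 m (_ : 0 < K.+2)) //.
rewrite -[X in X * _](prednK x0) mulSn addnC; apply: leq_add => //.
exact: leq_trans h2 h3.
Qed.

Lemma amgm (I : finType) (A : pred I) (F : I -> nat) : 0 < #|A| ->
  \prod_(i in A) F i <= P #|A| (\sum_(i in A) F i).
Proof.
move=> A0; rewrite -!big_enum -(big_map F predT id) -(big_map F predT id).
by apply: amgm_seq => //; rewrite size_map cardE.
Qed.

Lemma subdiv_mono k b n : 0 < k -> b <= n -> b - b %/ k <= n - n %/ k.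
Proof.
move=> k0 /subnK <-; elim: (n - b) => // d IH.
rewrite addSn; have := leq_div (d + b) k => hl.
have := dmS k (d + b) k0.
case: ifP => _ [-> _]; lia.
Qed.

Definition Ineq k m := forall b, m %/ k <= b <= m ->
  g k b.+1 + g k m + P k.-1 (m - b) <= g k b + g k m.+1.

Lemma core k n : 2 < k -> (forall m, m <= n -> g k m = E k m) -> (forall m, m < n -> Ineq k m) ->
  forall b, n %/ k <= b < n ->
  g k b.+1 + g k (n %/ k) + P k.-1 (n - b) <= g k b + g k (n %/ k).+1 + P k.-1 (n - n %/ k).
Proof.
move=> k2 HG HI b /andP[cb bn].
have k0 : 0 < k by lia.
have k1 : 1 < k by lia.
have Drec := E_S k b k1.
rewrite -!HG in Drec; [|lia|lia].
have cn : n %/ k < n by apply: ltn_Pdiv => //; lia.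
have h1 : (n %/ k) %/ k <= b %/ k by apply: leq_div2r.
have h2 : b %/ k <= n %/ k by apply: leq_div2r; lia.
have I := HI _ cn (b %/ k) (introT andP (conj h1 h2)).
have sm := subdiv_mono k b n k0 (ltnW bn).
have bdb := leq_div b k.
have K0 : 0 < k.-1 by lia.
set c := n %/ k in cb cn h1 h2 I sm Drec *.
set cb' := b %/ k in h1 h2 I sm bdb Drec *.
have Cv := P_conv k.-1 (c - cb') (b - cb') (n - b - (c - cb')) K0.
have e1 : c - cb' + (n - b - (c - cb')) = n - b by lia.
have e2 : b - cb' + (n - b - (c - cb')) = n - c by lia.
rewrite e1 e2 in Cv.
have wx : c - cb' <= b - cb' by lia.
have Cv' := Cv wx. lia.
Qed.

Lemma stepV k n : 2 < k -> k <= n.+1 -> g k n = E k n ->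
  (forall b, n %/ k <= b < n ->
    g k b.+1 + g k (n %/ k) + P k.-1 (n - b) <= g k b + g k (n %/ k).+1 + P k.-1 (n - n %/ k)) ->
  forall u : {ffun 'I_k -> nat}, \sum_i u i = n.+1 -> (forall i, u i < n.+1) ->
  V u <= E k n.+1.
Proof.
move=> k2 kn Gn C u su hu.
have k0 : 0 < k by lia.
have cI : 0 < #|'I_k| by rewrite card_ord.
have [i0 hi0] := eq_bigmax (fun i => u i) cI.
have ule j : u j <= u i0 by rewrite -hi0; apply: leq_bigmax.
set a := u i0 in hi0 ule.
have ka : n.+1 <= k * a.
  have : \sum_i u i <= \sum_(i < k) a by apply: leq_sum => j _; apply: ule.
  by rewrite sum_nat_const card_ord su mulnC.
have a0 : 0 < a by case: (posnP a) ka => [->|//]; rewrite muln0.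
pose b := a.-1.
have ab : a = b.+1 by rewrite /b prednK.
pose u' : {ffun 'I_k -> nat} := [ffun j => if j == i0 then b else u j].
have u'i0 : u' i0 = b by rewrite ffunE eqxx.
have u'j j : j != i0 -> u' j = u j by rewrite ffunE => /negbTE ->.
set S := \sum_(j | j != i0) u j.
have sS : \sum_i u i = a + S by rewrite (bigD1 i0).
have sS' : \sum_i u' i = b + S.
  by rewrite (bigD1 i0) //= u'i0; congr (_ + _); apply: eq_bigr => j; apply: u'j.
set Q := \prod_(j | j != i0) u j.
have pQ : \prod_i u i = a * Q by rewrite (bigD1 i0).
have pQ' : \prod_i u' i = b * Q.
  by rewrite (bigD1 i0) //= u'i0; congr (_ * _); apply: eq_bigr => j; apply: u'j.
set Sg := \sum_(j | j != i0) g k (u j).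
have gS : \sum_i g k (u i) = g k a + Sg by rewrite (bigD1 i0).
have gS' : \sum_i g k (u' i) = g k b + Sg.
  by rewrite (bigD1 i0) //= u'i0; congr (_ + _); apply: eq_bigr => j /u'j ->.
have hV' : V u' <= g k n.
  apply: Vle; first lia.
  case: (ltnP n k) => nk; [by left | right] => j.
  case: (j =P i0) => [->|/eqP ji0]; first by rewrite u'i0; have := hu i0; lia.
  rewrite u'j //.
  have : u j <= S by rewrite /S (bigD1 j) //= leq_addr.
  have := ule j; lia.
have hQ : Q <= P k.-1 (n - b).
  have cA : #|(fun j : 'I_k => j != i0)| = k.-1.
    by rewrite -[in RHS](card_ord k); apply: cardC1.
  have := @amgm _ (fun j : 'I_k => j != i0) u.
  rewrite cA => /(_ (_ : 0 < k.-1)) h.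
  have -> : n - b = S by lia.
  by apply: h; lia.
have cb : n %/ k <= b < n.
  apply/andP; split; last by have := hu i0; lia.
  by rewrite -ltnS ltn_divLR // mulnC -ab.
have Cb := C b cb.
have k1 : 1 < k by lia.
have ES := E_S k n k1.
rewrite /V gS pQ; rewrite /V gS' pQ' in hV'.
rewrite ab in Cb *.
rewrite -Gn in ES; lia.
Qed.

Lemma goodS k n : 2 < k -> k <= n.+1 -> g k n = E k n ->
  (forall b, n %/ k <= b < n ->
    g k b.+1 + g k (n %/ k) + P k.-1 (n - b) <= g k b + g k (n %/ k).+1 + P k.-1 (n - n %/ k)) ->
  g k n.+1 = E k n.+1.
Proof.
move=> k2 kn Gn C; have k0 : 0 < k by lia.
apply/eqP; rewrite eqn_leq; apply/andP; split.
  rewrite gE ltnNge kn /=; apply/bigmax_leqP => t /andP[/eqP st /forallP ht].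
  pose u : {ffun 'I_k -> nat} := [ffun i => val (t i)].
  have uv i : u i = t i by rewrite ffunE.
  have -> : \sum_i g k (t i) + \prod_i (t i : nat) = V u.
    by rewrite /V; congr (_ + _); apply: eq_bigr => i _; rewrite uv.
  apply: (stepV k n k2 kn Gn C).
    by rewrite -[RHS]st; apply: eq_bigr => i _; rewrite uv.
  by move=> i; rewrite uv.
rewrite -eqt_V //; apply: Vle; first by apply: eqt_sum.
right => i; rewrite ffunE.
have h1 : n.+1 %/ k < n.
  rewrite ltn_divLR //; have := leq_mul (leqnn n) k2; lia.
have := leq_b1 (i < n.+1 %% k); lia.
Qed.

Lemma main k : 2 < k -> forall n,
  (forall m, m <= n -> g k m = E k m) /\ (forall m, m < n -> Ineq k m).
Proof.
move=> k2; have k0 : 0 < k by lia.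
have k1 : 1 < k by lia.
elim=> [|n [HG HI]].
  split=> // m; rewrite leqn0 => /eqP ->.
  by rewrite g_small // E_small.
have C := core k n k2 HG HI.
have Gn1 : g k n.+1 = E k n.+1.
  case: (ltnP n.+1 k) => nk; first by rewrite g_small // E_small.
  by apply: goodS => //; apply: HG.
split.
  move=> m; rewrite leq_eqVlt => /orP[/eqP -> //|]; rewrite ltnS; exact: HG.
move=> m; rewrite ltnS leq_eqVlt => /orP[/eqP ->|]; last exact: HI.
move=> b /andP[cb bn].
have ES := E_S k n k1.
rewrite -(HG n (leqnn n)) -Gn1 in ES.
case: (ltnP b n) => bn'.
  have := C b (introT andP (conj cb bn')). lia.
have -> : b = n by lia.
rewrite subnn P0; [lia|lia].
Qed.

Theorem lemma4p2 (k n : nat) : 3 <= k -> k <= n ->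
  exists t : {ffun 'I_k -> nat},
    [/\ \sum_(i < k) t i = n,
        (forall i j : 'I_k, i != j -> t i - t j <= 1) &
        g k n = \sum_(i < k) g k (t i) + \prod_(i < k) t i].
Proof.
move=> k3 kn; have k0 : 0 < k by lia.
exists (eqt k n); split.
- exact: eqt_sum.
- by move=> i j _; apply: eqt_diff.
- have [HG _] := main k k3 n.
  by rewrite (HG n (leqnn n)) -eqt_V.
Qed.
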